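(* Let $K$, $U$, $\Gamma$ be as in the context and let $M$ be a $U$-module. (1) If $u\in U$, $x\in M$ and $\mathbf q\in\operatorname{Supp}(\Gamma ux)$, then there exists $\mathbf p\in\operatorname{Ass}(\Gamma x)$ such that $\dfrac{\Gamma u\Gamma}{\mathbf q u\Gamma+\Gamma u\mathbf p}\neq 0$. (2) If all prime ideals in $\operatorname{Ass}(M)$ have the same coheight, then $\operatorname{Ass}(\Gamma(x+y))\subseteq\operatorname{Ass}(\Gamma x)\cup\operatorname{Ass}(\Gamma y)$ for all $x,y\in M$.
   Context: $K$ is an algebraically closed field of characteristic zero. $U$ is a $K$-algebra and $\Gamma\subseteq U$ a commutative $K$-subalgebra such that: (i) $\Gamma$ is finitely generated as a $K$-algebra; (ii) there are finitely many $u_1,\dots,u_n\in U$ generating $U$ as a $K$-algebra together with $\Gamma$; (iii) for every $u\in U$, $\Gamma u\Gamma$ is finitely generated both as a left and as a right $\Gamma$-module. Modules over $U$ are regarded as $\Gamma$-modules by restriction. $\operatorname{Supp}(N)=\{\mathbf p\in\operatorname{Spec}\Gamma:N_{\mathbf p}\ne0\}$; $\operatorname{Ass}(N)$ is the set of primes of the form $\operatorname{ann}_\Gamma(z)$, $z\in N$. Coheight: with $Z_0=\operatorname{Specm}\Gamma$ and $Z_i=Z_{i-1}\cup\operatorname{Max}(\operatorname{Spec}\Gamma\setminus Z_{i-1})$ ($\operatorname{Max}$ = inclusion-maximal elements), the coheight of $\mathbf p$ is the least $i$ with $\mathbf p\in Z_i$. *)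

(* Defs.v *)
From HB Require Import structures.
From mathcomp Require Import all_boot all_order all_algebra.
Set Implicit Arguments. Unset Strict Implicit. Unset Printing Implicit Defensive.
Import GRing.Theory.
Local Open Scope ring_scope.

Section Defs.
Variables (K : fieldType) (U : algType K).

Inductive subalg_gen (S : U -> Prop) : U -> Prop :=
| sg_in x : S x -> subalg_gen S x
| sg_one : subalg_gen S 1
| sg_add x y : subalg_gen S x -> subalg_gen S y -> subalg_gen S (x + y)
| sg_mul x y : subalg_gen S x -> subalg_gen S y -> subalg_gen S (x * y)
| sg_scale (k : K) x : subalg_gen S x -> subalg_gen S (k *: x).

Definition comm_subalg (G : U -> Prop) : Prop :=
  [/\ G 1, (forall x y, G x -> G y -> G (x + y)), (forall x y, G x -> G y -> G (x * y)),
      (forall (k : K) x, G x -> G (k *: x)) & (forall x y, G x -> G y -> x * y = y * x)].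

Definition GuG (G : U -> Prop) (u w : U) : Prop :=
  exists s : seq (U * U), (forall ab, ab \in s -> G ab.1 /\ G ab.2) /\
    w = \sum_(ab <- s) ab.1 * u * ab.2.

Definition quG_Gup (G q p : U -> Prop) (u w : U) : Prop :=
  exists s : seq (U * U),
    (forall ab, ab \in s -> (q ab.1 /\ G ab.2) \/ (G ab.1 /\ p ab.2)) /\
    w = \sum_(ab <- s) ab.1 * u * ab.2.

Definition GuG_fg_left (G : U -> Prop) (u : U) : Prop :=
  exists vs : seq U, (forall v, v \in vs -> GuG G u v) /\
    forall w, GuG G u w -> exists cs : seq U, [/\ size cs = size vs,
       (forall c, c \in cs -> G c) & w = \sum_(i < size vs) cs`_i * vs`_i].

Definition GuG_fg_right (G : U -> Prop) (u : U) : Prop :=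
  exists vs : seq U, (forall v, v \in vs -> GuG G u v) /\
    forall w, GuG G u w -> exists cs : seq U, [/\ size cs = size vs,
       (forall c, c \in cs -> G c) & w = \sum_(i < size vs) vs`_i * cs`_i].

Definition standing (G : U -> Prop) : Prop :=
  [/\ comm_subalg G,
      (exists s : seq U, (forall x, x \in s -> G x) /\
          forall g, G g -> subalg_gen (fun x => x \in s) g),
      (exists us : seq U, forall w, subalg_gen (fun x => G x \/ x \in us) w)
    & (forall u, GuG_fg_left G u /\ GuG_fg_right G u)].

Definition subset (A B : U -> Prop) := forall x, A x -> B x.

Definition idealG (G P : U -> Prop) : Prop :=
  [/\ subset P G, P 0, (forall x y, P x -> P y -> P (x + y))
    & (forall g x, G g -> P x -> P (g * x))].

Definition primeG (G P : U -> Prop) : Prop :=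
  [/\ idealG G P, ~ P 1 & forall a b, G a -> G b -> P (a * b) -> P a \/ P b].

Definition maximalG (G P : U -> Prop) : Prop :=
  [/\ idealG G P, ~ P 1 &
    forall Q, idealG G Q -> ~ Q 1 -> subset P Q -> subset Q P].

Fixpoint Zco (G : U -> Prop) (i : nat) (P : U -> Prop) : Prop :=
  match i with
  | 0 => maximalG G P
  | i.+1 => Zco G i P \/
      [/\ primeG G P, ~ Zco G i P &
        forall Q, primeG G Q -> ~ Zco G i Q -> subset P Q -> subset Q P]
  end.

Definition coheight (G : U -> Prop) (P : U -> Prop) (n : nat) : Prop :=
  Zco G n P /\ forall j, (j < n)%N -> ~ Zco G j P.

Variable M : lmodType U.

(* Supp(N) for a Gamma-submodule N (given as a predicate):
   N_p <> 0, i.e. some z in N with z/1 <> 0 in N_p *)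
Definition Supp (G : U -> Prop) (N : M -> Prop) (P : U -> Prop) : Prop :=
  primeG G P /\ exists z, N z /\ forall s, G s -> ~ P s -> s *: z != 0.

Definition Ass (G : U -> Prop) (N : M -> Prop) (P : U -> Prop) : Prop :=
  primeG G P /\ exists z, N z /\ forall g, P g <-> (G g /\ g *: z = 0).

Definition Gcyc (G : U -> Prop) (x : M) : M -> Prop :=
  fun z => exists g, G g /\ z = g *: x.

End Defs.

(* Main.v *)
Require Import Defs.
From HB Require Import structures.
From mathcomp Require Import all_boot all_order all_algebra.
From Stdlib Require Import ClassicalEpsilon Classical.
Set Implicit Arguments. Unset Strict Implicit. Unset Printing Implicit Defensive.
Import GRing.Theory.
Local Open Scope ring_scope.
Notation psub := Defs.subset.

Section Ring.
Variables (K : fieldType) (U : algType K) (G : U -> Prop).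
Hypothesis HG : comm_subalg G.

Lemma G1 : G 1. Proof. by case: HG. Qed.
Lemma GD x y : G x -> G y -> G (x + y). Proof. by case: HG => _ H _ _ _; apply: H. Qed.
Lemma GM x y : G x -> G y -> G (x * y). Proof. by case: HG => _ _ H _ _; apply: H. Qed.
Lemma GZ (k : K) x : G x -> G (k *: x). Proof. by case: HG => _ _ _ H _; apply: H. Qed.
Lemma GC x y : G x -> G y -> x * y = y * x. Proof. by case: HG => _ _ _ _ H; apply: H. Qed.
Lemma G0 : G 0. Proof. by rewrite -(scale0r 1); apply: GZ; apply: G1. Qed.
Lemma GN x : G x -> G (- x). Proof. by move=> Gx; rewrite -scaleN1r; apply: GZ. Qed.
Lemma GB x y : G x -> G y -> G (x - y). Proof. by move=> Gx Gy; apply: GD => //; apply: GN. Qed.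

Record sring (R : U -> Prop) : Prop := SRing {
  srG : forall x, R x -> G x;
  sr0 : R 0; sr1 : R 1;
  srD : forall x y, R x -> R y -> R (x + y);
  srN : forall x, R x -> R (- x);
  srM : forall x y, R x -> R y -> R (x * y);
  srK : forall k : K, R (k *: 1) }.

Lemma sring_G : sring G.
Proof.
split=> //; [exact: G0|exact: G1|exact: GD|exact: GN|exact: GM|].
by move=> k; apply: GZ; apply: G1.
Qed.

Section SR.
Variables (R : U -> Prop) (HR : sring R).
Lemma srB x y : R x -> R y -> R (x - y).
Proof. by move=> ? ?; apply: (srD HR) => //; apply: (srN HR). Qed.
Lemma sr_sum (I : Type) (r : seq I) (P : pred I) (F : I -> U) :
  (forall i, P i -> R (F i)) -> R (\sum_(i <- r | P i) F i).
Proof. by move=> H; apply: big_ind => //; [exact: (sr0 HR) | exact: (srD HR)]. Qed.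
Lemma sr_prod (I : Type) (r : seq I) (P : pred I) (F : I -> U) :
  (forall i, P i -> R (F i)) -> R (\prod_(i <- r | P i) F i).
Proof. by move=> H; apply: big_ind => //; [exact: (sr1 HR) | exact: (srM HR)]. Qed.
Lemma srX x n : R x -> R (x ^+ n).
Proof. by move=> Rx; elim: n => [|n IH]; [rewrite expr0; exact: (sr1 HR)| rewrite exprS; apply: (srM HR)]. Qed.
Lemma srZ (k : K) x : R x -> R (k *: x).
Proof. by move=> Rx; rewrite -[x]mul1r scalerAl; apply: (srM HR) => //; apply: (srK HR). Qed.
End SR.


Definition pover (R : U -> Prop) (p : {poly U}) := forall i, R p`_i.
Definition adj (R : U -> Prop) (t : U) : U -> Prop :=
  fun x => exists p, pover R p /\ x = p.[t].

Section Adj.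
Variables (R : U -> Prop) (HR : sring R) (t : U) (Gt : G t).

Lemma pover_horner_G p : pover R p -> G p.[t].
Proof.
move=> Pp; rewrite horner_coef; apply: (sr_sum (sring_G)) => i _.
by apply: GM; [exact: (srG HR) | apply: (srX sring_G)].
Qed.

Lemma poverC c : R c -> pover R c%:P.
Proof. by move=> Rc i; rewrite coefC; case: (i == 0)%N => //; exact: (sr0 HR). Qed.

Lemma poverD p q : pover R p -> pover R q -> pover R (p + q).
Proof. by move=> Pp Pq i; rewrite coefD; apply: (srD HR). Qed.
Lemma poverN p : pover R p -> pover R (- p).
Proof. by move=> Pp i; rewrite coefN; apply: (srN HR). Qed.
Lemma poverB p q : pover R p -> pover R q -> pover R (p - q).
Proof. by move=> Pp Pq; apply: poverD => //; apply: poverN. Qed.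
Lemma poverM p q : pover R p -> pover R q -> pover R (p * q).
Proof.
move=> Pp Pq i; rewrite coefM; apply: (sr_sum HR) => j _; exact: (srM HR).
Qed.
Lemma pover0 : pover R 0.
Proof. by move=> i; rewrite coef0; exact: (sr0 HR). Qed.
Lemma poverX : pover R 'X.
Proof. by move=> i; rewrite coefX; case: (i == 1)%N; [exact: (sr1 HR)|exact: (sr0 HR)]. Qed.
Lemma poverXn n : pover R 'X^n.
Proof. by move=> i; rewrite coefXn; case: (i == n)%N; [exact: (sr1 HR)|exact: (sr0 HR)]. Qed.

Lemma comm_t p : pover R p -> comm_poly p t.
Proof. by move=> Pp; rewrite /comm_poly; apply: GC => //; apply: pover_horner_G. Qed.

Lemma hornerM_t p q : pover R q -> (p * q).[t] = p.[t] * q.[t].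
Proof. by move=> Pq; apply: hornerM_comm; apply: comm_t. Qed.

Lemma adj_sring : sring (adj R t).
Proof.
split.
- by move=> x [p [Pp ->]]; apply: pover_horner_G.
- by exists 0; split; [exact: pover0| rewrite horner0].
- by exists 1%:P; split; [apply: poverC; exact: (sr1 HR)| rewrite hornerC].
- move=> x y [p [Pp ->]] [q [Pq ->]]; exists (p + q); split; first exact: poverD.
  by rewrite hornerD.
- move=> x [p [Pp ->]]; exists (- p); split; first exact: poverN.
  by rewrite hornerN.
- move=> x y [p [Pp ->]] [q [Pq ->]]; exists (p * q); split; first exact: poverM.
  by rewrite hornerM_t.
- move=> k; exists (k *: 1)%:P; split; first by apply: poverC; exact: (srK HR).
  by rewrite hornerC.
Qed.

Lemma adj_base r : R r -> adj R t r.
Proof. by move=> Rr; exists r%:P; split; [exact: poverC| rewrite hornerC]. Qed.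
Lemma adj_t : adj R t t.
Proof. by exists 'X; split; [exact: poverX| rewrite hornerX]. Qed.
End Adj.


Inductive gspan (R : U -> Prop) (s : seq U) : U -> Prop :=
| gspan0 : gspan R s 0
| gspang a v : R a -> v \in s -> gspan R s (a * v)
| gspanD x y : gspan R s x -> gspan R s y -> gspan R s (x + y).

Lemma gspan_sub R (s1 s2 : seq U) x :
  {subset s1 <= s2} -> gspan R s1 x -> gspan R s2 x.
Proof.
move=> sub; elim=> [|a v Ra vs|y z _ IHy _ IHz]; first exact: gspan0.
- by apply: gspang => //; apply: sub.
- exact: gspanD.
Qed.

Lemma gspan_ext (R R' : U -> Prop) s x : (forall y, R y -> R' y) -> gspan R s x -> gspan R' s x.
Proof.
move=> sub; elim=> [|a v Ra vs|y z _ IHy _ IHz]; first exact: gspan0.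
- by apply: gspang => //; apply: sub.
- exact: gspanD.
Qed.

Lemma gspan_ideal R (J : U -> Prop) s x : idealG R J -> (forall v, v \in s -> J v) ->
  gspan R s x -> J x.
Proof.
case=> _ J0 JD JM Hs; elim=> [|a v Ra vs|y z _ IHy _ IHz] //.
- by apply: JM => //; apply: Hs.
- exact: JD.
Qed.

Lemma gspan_mulL R s a x : sring R -> R a -> gspan R s x -> gspan R s (a * x).
Proof.
move=> HR Ra; elim=> [|b v Rb vs|y z _ IHy _ IHz].
- rewrite mulr0; exact: gspan0.
- rewrite mulrA; apply: gspang => //; exact: (srM HR).
- rewrite mulrDr; exact: gspanD.
Qed.

Definition FG (R : U -> Prop) := forall J, idealG R J ->
  exists s : seq U, (forall v, v \in s -> J v) /\ forall x, J x -> gspan R s x.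

End Ring.

Lemma lift_seq (T : eqType) (T' : eqType) (f : T' -> T) (Q : T' -> Prop) (s : seq T) :
  (forall x, x \in s -> exists y, f y = x /\ Q y) ->
  exists ys, map f ys = s /\ forall y, y \in ys -> Q y.
Proof.
elim: s => [|x s IH] H; first by exists [::].
have [y [fy Qy]] := H x (mem_head _ _).
have [ys [mys Qys]] : exists ys, map f ys = s /\ forall y, y \in ys -> Q y.
  by apply: IH => z zs; apply: H; rewrite in_cons zs orbT.
exists (y :: ys); split; first by rewrite /= fy mys.
by move=> z; rewrite in_cons => /orP [/eqP -> //|]; apply: Qys.
Qed.

Lemma nat_choice (T : Type) (d0 : T) N (Phi : nat -> T -> Prop) :
  (forall d, (d < N)%N -> exists y, Phi d y) -> exists f, forall d, (d < N)%N -> Phi d (f d).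
Proof.
elim: N => [|N IH] H; first by exists (fun _ => d0).
have [f Hf] : exists f, forall d, (d < N)%N -> Phi d (f d).
  by apply: IH => d dN; apply: H; apply: ltnW.
have [y Hy] := H N (ltnSn N).
exists (fun d => if d == N then y else f d) => d; rewrite ltnS leq_eqVlt.
by case: eqP => [-> //| _ /= dN]; apply: Hf.
Qed.


Section Hilbert.
Variables (K : fieldType) (U : algType K) (G : U -> Prop).
Hypothesis HG : comm_subalg G.
Variables (R : U -> Prop) (HR : sring G R) (FGR : FG R) (t : U) (Gt : G t).
Let S := adj R t.
Let HS : sring G S := adj_sring HG HR Gt.

Lemma size_drop_top (p : {poly U}) d : (size p <= d.+1)%N -> p`_d = 0 -> (size p <= d)%N.
Proof.
rewrite leq_eqVlt => /orP [/eqP sp pd|//].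
suff: p == 0 by move/eqP => ->; rewrite size_poly0.
by rewrite -lead_coef_eq0 lead_coefE sp /= pd.
Qed.

Lemma size_CM (c : U) (p : {poly U}) : (size (c%:P * p)%R <= size p)%N.
Proof.
apply: leq_trans (size_polyMleq _ _) _.
have := size_polyC_leq1 c; case: (size c%:P) => [|[|//]] _ //=.
by apply: leq_trans (leq_pred _) _.
Qed.

Lemma size_MXn (p : {poly U}) e : (size (p * 'X^e)%R <= size p + e)%N.
Proof.
apply: leq_trans (size_polyMleq _ _) _.
by rewrite size_polyXn addnS.
Qed.

Variables (J : U -> Prop) (HJ : idealG S J).

Definition Ld d a := R a /\ exists p, pover R p /\ (size p <= d.+1)%N /\ p`_d = a /\ J p.[t].

Lemma JM g x : S g -> J x -> J (g * x). Proof. by case: HJ => _ _ _ H; apply: H. Qed.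
Lemma JD x y : J x -> J y -> J (x + y). Proof. by case: HJ => _ _ H _; apply: H. Qed.
Lemma J0 : J 0. Proof. by case: HJ. Qed.
Lemma JN x : J x -> J (- x).
Proof. by move=> Jx; rewrite -mulN1r; apply: JM => //; apply: (srN HS); apply: (sr1 HS). Qed.

Lemma Ld_ideal d : idealG R (Ld d).
Proof.
split.
- by move=> x [].
- split; first exact: (sr0 HR).
  exists 0; rewrite size_poly0 coef0 horner0; split; first exact: (pover0 HR).
  by split => //; split => //; exact: J0.
- move=> x y [Rx [p [Pp [sp [px Jp]]]]] [Ry [q [Pq [sq [qy Jq]]]]].
  split; first exact: (srD HR).
  exists (p + q); split; first exact: (poverD HR).
  split; first by apply: leq_trans (size_polyD _ _) _; rewrite geq_max sp sq.
  by rewrite coefD px qy hornerD; split => //; apply: JD.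
- move=> g x Rg [Rx [p [Pp [sp [px Jp]]]]].
  split; first exact: (srM HR).
  exists (g%:P * p); split; first by apply: (poverM HR) => //; apply: (poverC HR).
  split.
    apply: leq_trans (size_polyMleq _ _) _.
    have := size_polyC_leq1 g; case: (size g%:P) => [|[|//]] _ //=.
    by apply: leq_trans (leq_pred _) _.
  rewrite coefCM px hornerCM; split => //; apply: JM => //; exact: (adj_base HR).
Qed.

Lemma Ld_S d a : Ld d a -> Ld d.+1 a.
Proof.
move=> [Ra [p [Pp [sp [pa Jp]]]]]; split => //.
exists (p * 'X); split; first by apply: (poverM HR) => //; apply: (poverX HR).
split; first by apply: leq_trans (size_polyMleq _ _) _; rewrite size_polyX addn2 /=.
rewrite coefMX /= pa hornerMX; split => //.
have Gp := pover_horner_G HG HR Gt Pp.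
by rewrite (GC HG Gp Gt); apply: JM => //; exact: (adj_t HR).
Qed.

Lemma Ld_le d e a : (d <= e)%N -> Ld d a -> Ld e a.
Proof.
move=> de; rewrite -(subnKC de); elim: (e - d)%N => [|n IH]; first by rewrite addn0.
by move=> H; rewrite addnS; apply: Ld_S; apply: IH.
Qed.

Definition Linf a := exists d, Ld d a.

Lemma Linf_ideal : idealG R Linf.
Proof.
split.
- by move=> x [d [Rx _]].
- by exists 0%N; case: (Ld_ideal 0).
- move=> x y [d Hx] [e Hy]; exists (maxn d e); case: (Ld_ideal (maxn d e)) => _ _ H _.
  by apply: H; [apply: Ld_le Hx; apply: leq_maxl| apply: Ld_le Hy; apply: leq_maxr].
- move=> g x Rg [d Hx]; exists d; case: (Ld_ideal d) => _ _ _ H; exact: H.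
Qed.

Lemma Linf_bound (gs : seq U) : (forall g, g \in gs -> Linf g) ->
  exists N, forall g, g \in gs -> Ld N g.
Proof.
elim: gs => [|g gs IH] H; first by exists 0%N.
have [d Hd] := H g (mem_head _ _).
have [N HN] : exists N, forall g, g \in gs -> Ld N g.
  by apply: IH => z zs; apply: H; rewrite in_cons zs orbT.
exists (maxn d N) => z; rewrite in_cons => /orP [/eqP ->|zs].
  by apply: Ld_le Hd; apply: leq_maxl.
by apply: Ld_le (HN z zs); apply: leq_maxr.
Qed.

Definition gpoly D (q : {poly U}) := pover R q /\ (size q <= D.+1)%N /\ J q.[t].

Lemma lift_comb D (FL : seq {poly U}) (HFL : forall q, q \in FL -> gpoly D q) e a :
  gspan R (map (fun q : {poly U} => q`_D) FL) a ->
  exists Q, pover R Q /\ (size Q <= (D + e).+1)%N /\ Q`_(D + e) = a /\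
     gspan S (map (horner^~ t) FL) Q.[t].
Proof.
elim=> [|r v Rr vs|x y _ [Q1 [P1 [s1 [c1 sp1]]]] _ [Q2 [P2 [s2 [c2 sp2]]]]].
- exists 0; rewrite size_poly0 coef0 horner0; do ! split => //; [exact: (pover0 HR) | exact: gspan0].
- case/mapP: vs => q qFL ->; have [Pq [sq Jq]] := HFL q qFL.
  exists (r%:P * (q * 'X^e)); split.
    by apply: (poverM HR); [apply: (poverC HR)|apply: (poverM HR) => //; apply: (poverXn HR)].
  split.
    apply: leq_trans (size_CM _ _) _; apply: leq_trans (size_MXn _ _) _.
    by rewrite -addSn leq_add2r.
  split; first by rewrite coefCM coefMXn ltnNge leq_addl /= addnK.
  rewrite hornerCM (hornerM_t HG HR Gt); last exact: (poverXn HR).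
  have Gq := pover_horner_G HG HR Gt Pq.
  have Gte : G (t ^+ e) by apply: (srX (sring_G HG)).
  rewrite hornerXn (GC HG Gq Gte) mulrA.
  apply: gspang.
    by apply: (srM HS); [exact: (adj_base HR)| apply: (srX HS); exact: (adj_t HR)].
  by apply: map_f.
- exists (Q1 + Q2); split; first exact: (poverD HR).
  split; first by apply: leq_trans (size_polyD _ _) _; rewrite geq_max s1 s2.
  by rewrite coefD c1 c2 hornerD; split => //; apply: gspanD.
Qed.


Section Reduce.
Variables (N : nat) (FL : seq {poly U}) (HL : nat -> seq {poly U}).
Hypotheses (hFL1 : forall q, q \in FL -> gpoly N q)
  (hFL2 : forall a, Linf a -> gspan R (map (fun q : {poly U} => q`_N) FL) a)
  (hHL1 : forall d, (d < N)%N -> forall q, q \in HL d -> gpoly d q)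
  (hHL2 : forall d, (d < N)%N -> forall a, Ld d a ->
        gspan R (map (fun q : {poly U} => q`_d) (HL d)) a).

Let Gp := FL ++ flatten [seq HL d | d <- iota 0 N].

Lemma Gp_J v : v \in map (horner^~ t) Gp -> J v.
Proof.
case/mapP => q qin ->; move: qin; rewrite mem_cat => /orP [qF|/flatten_mapP [d]].
  by have [_ [_ ?]] := hFL1 qF.
rewrite mem_iota add0n /= => dN qH.
by have [_ [_ ?]] := hHL1 dN qH.
Qed.

Lemma reduce n p : pover R p -> (size p <= n)%N -> J p.[t] ->
  gspan S (map (horner^~ t) Gp) p.[t].
Proof.
elim: n p => [|d IH] p Pp sp Jp.
  move: sp; rewrite leqn0 size_poly_eq0 => /eqP ->; rewrite horner0; exact: gspan0.
have Lda : Ld d p`_d by split; [exact: Pp| exists p].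
have [Q [PQ [sQ [cQ spQ]]]] : exists Q, pover R Q /\ (size Q <= d.+1)%N /\ Q`_d = p`_d /\
     gspan S (map (horner^~ t) Gp) Q.[t].
  case: (ltnP d N) => [dN|Nd].
    have [Q [PQ [sQ [cQ spQ]]]] := lift_comb (hHL1 dN) 0 (hHL2 dN Lda).
    exists Q; rewrite addn0 in sQ cQ; do ! split => //.
    apply: gspan_sub spQ => v /mapP [q qH ->]; apply: map_f.
    rewrite mem_cat; apply/orP; right; apply/flatten_mapP; exists d => //.
    by rewrite mem_iota add0n.
  have LN : Linf p`_d by exists d.
  have [Q [PQ [sQ [cQ spQ]]]] := lift_comb hFL1 (d - N) (hFL2 LN).
  exists Q; rewrite subnKC // in sQ cQ; do ! split => //.
  apply: gspan_sub spQ => v /mapP [q qH ->]; apply: map_f.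
  by rewrite mem_cat qH.
have JQ : J Q.[t].
  by apply: (gspan_ideal HJ) spQ => v; apply: Gp_J.
have -> : p.[t] = (p - Q).[t] + Q.[t] by rewrite hornerD hornerN addrNK.
apply: gspanD => //; apply: IH.
- exact: (poverB HR).
- apply: size_drop_top; last by rewrite coefB cQ subrr.
  apply: leq_trans (size_polyD _ _) _; rewrite size_polyN geq_max sQ andbT //.
- by rewrite hornerD hornerN; apply: JD => //; apply: JN.
Qed.
End Reduce.

Lemma FG_J : exists s : seq U, (forall v, v \in s -> J v) /\ forall x, J x -> gspan S s x.
Proof.
have [gsL [gsLin gsLsp]] := FGR Linf_ideal.
have [N HN] := Linf_bound gsLin.
have [FL [mFL hFL1]] : exists FL, map (fun q : {poly U} => q`_N) FL = gsL /\
    forall q, q \in FL -> gpoly N q.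
  apply: lift_seq => g /HN [Rg [p [Pp [sp [pg Jp]]]]].
  by exists p; do ! split.
have [HL hHL] : exists HL : nat -> seq {poly U}, forall d, (d < N)%N ->
   (forall q, q \in HL d -> gpoly d q) /\
   (forall a, Ld d a -> gspan R (map (fun q : {poly U} => q`_d) (HL d)) a).
  apply: (@nat_choice _ [::] N (fun d HLd => (forall q, q \in HLd -> gpoly d q) /\
     (forall a, Ld d a -> gspan R (map (fun q : {poly U} => q`_d) HLd) a))) => d dN.
  have [gs [gsin gssp]] := FGR (Ld_ideal d).
  have [qs [mqs hqs]] : exists qs, map (fun q : {poly U} => q`_d) qs = gs /\
      forall q, q \in qs -> gpoly d q.
    apply: lift_seq => g /gsin [Rg [p [Pp [sp [pg Jp]]]]].
    by exists p; do ! split.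
  by exists qs; split => // a /gssp; rewrite mqs.
have hHL1 : forall d, (d < N)%N -> forall q, q \in HL d -> gpoly d q.
  by move=> d dN; case: (hHL d dN).
have hHL2 : forall d, (d < N)%N -> forall a, Ld d a ->
    gspan R (map (fun q : {poly U} => q`_d) (HL d)) a.
  by move=> d dN; case: (hHL d dN).
have hFL2 : forall a, Linf a -> gspan R (map (fun q : {poly U} => q`_N) FL) a.
  by move=> a /gsLsp; rewrite mFL.
exists (map (horner^~ t) (FL ++ flatten [seq HL d | d <- iota 0 N])); split.
  by move=> v; apply: (Gp_J hFL1 hHL1).
move=> x Jx; have [p [Pp xp]] : S x by case: HJ => H _ _ _; apply: H.
rewrite xp in Jx *.
exact: (reduce hFL1 hFL2 hHL1 hHL2 Pp (leqnn _)).
Qed.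
End Hilbert.

Lemma hilbert_step (K : fieldType) (U : algType K) (G : U -> Prop) (HG : comm_subalg G)
  (R : U -> Prop) (HR : sring G R) (FGR : FG R) (t : U) (Gt : G t) : FG (adj R t).
Proof. by move=> J HJ; apply: (FG_J HG HR FGR Gt HJ). Qed.


Section Noeth.
Variables (K : fieldType) (U : algType K) (G : U -> Prop).
Hypothesis HG : comm_subalg G.

Definition R0 : U -> Prop := fun x => exists k : K, x = k *: 1.

Lemma R0_sring : sring G R0.
Proof.
split.
- by move=> x [k ->]; apply: (GZ HG); apply: (G1 HG).
- by exists 0; rewrite scale0r.
- by exists 1; rewrite scale1r.
- by move=> x y [a ->] [b ->]; exists (a + b); rewrite scalerDl.
- by move=> x [a ->]; exists (- a); rewrite scaleNr.
- by move=> x y [a ->] [b ->]; exists (a * b); rewrite -scalerAl mul1r scalerA.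
- by move=> k; exists k.
Qed.

Lemma R0_FG : FG R0.
Proof.
move=> J [JR J0 JD JM].
case: (classic (exists x, J x /\ x != 0)) => [[x [Jx x0]]|H].
  exists [:: 1]; split.
    move=> v; rewrite mem_seq1 => /eqP ->.
    have [k xk] := JR x Jx.
    have k0 : k != 0 by apply: contraNneq x0 => k0; rewrite xk k0 scale0r.
    have -> : (1 : U) = (k^-1 *: 1) * x by rewrite xk -scalerAl mul1r scalerA mulVf // scale1r.
    by apply: JM => //; exists k^-1.
  move=> y Jy; rewrite -[y]mulr1; apply: gspang; last by rewrite mem_seq1.
  exact: JR.
exists [::]; split => // y Jy.
have -> : y = 0 by apply: NNPP => ny; apply: H; exists y; split => //; apply/eqP.
exact: gspan0.
Qed.

Definition tower (l : seq U) : U -> Prop := foldr (fun t R => adj R t) R0 l.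

Lemma tower_ok l : (forall t, t \in l -> G t) ->
  [/\ sring G (tower l), FG (tower l) & forall t, t \in l -> tower l t].
Proof.
elim: l => [|t l IH] Hl; first by split => //; [exact: R0_sring | exact: R0_FG].
have Gt : G t by apply: Hl; apply: mem_head.
have [HR FGR inl] : [/\ sring G (tower l), FG (tower l) & forall t, t \in l -> tower l t].
  by apply: IH => x xl; apply: Hl; rewrite in_cons xl orbT.
split => /=.
- exact: (adj_sring HG HR Gt).
- exact: (hilbert_step HG HR FGR Gt).
- move=> x; rewrite in_cons => /orP [/eqP ->|xl]; first exact: (adj_t HR).
  by apply: (adj_base HR); apply: inl.
Qed.

Lemma FG_ext (R R' : U -> Prop) : (forall x, R x <-> R' x) -> FG R -> FG R'.
Proof.
move=> e FGR J [JR J0 JD JM].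
have [s [sJ sp]] : exists s : seq U, (forall v, v \in s -> J v) /\ forall x, J x -> gspan R s x.
  apply: FGR; split => //.
  - by move=> x /JR /e.
  - by move=> g x /e; apply: JM.
exists s; split => // x /sp; apply: gspan_ext => y /e; done.
Qed.

Lemma FG_G (s : seq U) : (forall x, x \in s -> G x) ->
  (forall g, G g -> subalg_gen (fun x => x \in s) g) -> FG G.
Proof.
move=> sG gen; have [HR FGR ins] := tower_ok sG.
apply: FG_ext FGR => x; split; first exact: (srG HR).
move=> /gen; elim => {x} [x xs||||].
- exact: ins.
- exact: (sr1 HR).
- by move=> x y _ ? _ ?; apply: (srD HR).
- by move=> x y _ ? _ ?; apply: (srM HR).
- by move=> k x _ ?; apply: (srZ HR).
Qed.

Lemma FG_max (R : U -> Prop) : FG R -> forall F : (U -> Prop) -> Prop,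
  (forall I, F I -> idealG R I) -> (exists I, F I) ->
  exists I, F I /\ forall J, F J -> Defs.subset I J -> Defs.subset J I.
Proof.
move=> FGR F FI [I0 FI0]; apply: NNPP => Hn.
have step : forall I, exists J, F I -> [/\ F J, Defs.subset I J & ~ Defs.subset J I].
  move=> I; case: (classic (F I)) => [FIx|nFI]; last by exists I.
  have : ~ (forall J, F J -> Defs.subset I J -> Defs.subset J I) by move=> H; apply: Hn; exists I.
  move=> /not_all_ex_not [J HJ]; exists J => _.
  case: (classic (F J)) => [FJ|nFJ]; last by case: HJ.
  case: (classic (Defs.subset I J)) => [sIJ|nsIJ]; last by case: HJ.
  by split => // sJI; apply: HJ.
pose nx I := proj1_sig (constructive_indefinite_description _ (step I)).
have nxP I : F I -> [/\ F (nx I), Defs.subset I (nx I) & ~ Defs.subset (nx I) I].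
  exact: (proj2_sig (constructive_indefinite_description _ (step I))).
pose ch n := iter n nx I0.
have Fch n : F (ch n) by elim: n => //= n IH; case: (nxP _ IH).
have inc n : Defs.subset (ch n) (ch n.+1) by case: (nxP _ (Fch n)).
have mono n m : (n <= m)%N -> Defs.subset (ch n) (ch m).
  move=> nm; rewrite -(subnKC nm); elim: (m - n)%N => [|k IH]; first by rewrite addn0.
  by rewrite addnS => x /IH /inc.
pose Un x := exists n, ch n x.
have HU : idealG R Un.
  split.
  - by move=> x [n xn]; case: (FI _ (Fch n)) => H _ _ _; apply: H.
  - by exists 0%N; case: (FI _ (Fch 0)).
  - move=> x y [n xn] [m ym]; exists (maxn n m).
    case: (FI _ (Fch (maxn n m))) => _ _ H _; apply: H.
      by apply: (mono n) => //; apply: leq_maxl.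
    by apply: (mono m) => //; apply: leq_maxr.
  - by move=> g x Rg [n xn]; exists n; case: (FI _ (Fch n)) => _ _ _ H; apply: H.
have [s [sU Usp]] := FGR Un HU.
have [N HN] : exists N, forall v, v \in s -> ch N v.
  elim: s sU {Usp} => [|v s IH] sU; first by exists 0%N.
  have [n vn] := sU v (mem_head _ _).
  have [N HN] : exists N, forall v, v \in s -> ch N v.
    by apply: IH => w ws; apply: sU; rewrite in_cons ws orbT.
  exists (maxn n N) => w; rewrite in_cons => /orP [/eqP ->|ws].
    by apply: (mono n) => //; apply: leq_maxl.
  by apply: (mono N) => //; [apply: leq_maxr | apply: HN].
case: (nxP _ (Fch N)) => _ _; apply => x xN1.
have : gspan R s x by apply: Usp; exists N.+1.
exact: gspan_ideal (FI _ (Fch N)) HN.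
Qed.

End Noeth.


Section Mod.
Variables (K : fieldType) (U : algType K) (G : U -> Prop).
Hypothesis HG : comm_subalg G.
Hypothesis NoethG : forall F : (U -> Prop) -> Prop,
  (forall I, F I -> idealG G I) -> (exists I, F I) ->
  exists I, F I /\ forall J, F J -> psub I J -> psub J I.
Variable M : lmodType U.

Let GC := GC HG.
Let GM := GM HG.
Let G1 := G1 HG.
Let G0 := G0 HG.

Lemma mCA a b c : G a -> G b -> a * (b * c) = b * (a * c).
Proof. by move=> Ga Gb; rewrite mulrA (GC Ga Gb) -mulrA. Qed.
Lemma mAC a b c : G b -> G c -> (a * b) * c = (a * c) * b.
Proof. by move=> Gb Gc; rewrite -mulrA (GC Gb Gc) mulrA. Qed.

Lemma scC a b (z : M) : G a -> G b -> a *: (b *: z) = b *: (a *: z).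
Proof. by move=> Ga Gb; rewrite !scalerA (GC Ga Gb). Qed.

Definition ann (v : M) (a : U) := G a /\ a *: v = 0.

Lemma ann_ideal v : idealG G (ann v).
Proof.
split.
- by move=> x [].
- by split; [exact: G0 | rewrite scale0r].
- by move=> x y [Gx xv] [Gy yv]; split; [exact: (GD HG) | rewrite scalerDl xv yv addr0].
- by move=> g x Gg [Gx xv]; split; [exact: GM | rewrite -scalerA xv scaler0].
Qed.

Section LemL.
Variables (P : U -> Prop) (HP : primeG G P).

Lemma notP_mul a b : G a -> G b -> ~ P a -> ~ P b -> ~ P (a * b).
Proof. by case: HP => _ _ H Ga Gb na nb /(H _ _ Ga Gb) [] . Qed.
Lemma notP1 : ~ P 1. Proof. by case: HP. Qed.
Lemma P_mul g x : G g -> P x -> P (g * x). Proof. by case: HP => [[_ _ _ H] _ _]; apply: H. Qed.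

Definition annp (v : M) (a : U) := G a /\ exists c, [/\ G c, ~ P c & (c * a) *: v = 0].

Lemma annp_ideal v : idealG G (annp v).
Proof.
split.
- by move=> x [].
- split; first exact: G0.
  by exists 1; split => //; [exact: notP1| rewrite mulr0 scale0r].
- move=> x y [Gx [c1 [Gc1 nc1 e1]]] [Gy [c2 [Gc2 nc2 e2]]].
  split; first exact: (GD HG).
  exists (c1 * c2); split; [exact: GM | exact: notP_mul|].
  rewrite mulrDr scalerDl (GC Gc1 Gc2) -!mulrA -!scalerA.
  rewrite -scalerA in e1; rewrite -scalerA in e2.
  by rewrite e1 scaler0 add0r (scC _ Gc2 Gc1) e2 !scaler0.
- move=> g x Gg [Gx [c [Gc nc e]]]; split; first exact: GM.
  by exists c; split => //; rewrite (mCA _ Gc Gg) -scalerA e scaler0.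
Qed.

Variables (w : M) (Hw : forall s, G s -> s *: w = 0 -> P s).

Lemma lemL : exists Q, [/\ primeG G Q, psub Q P &
  exists c, G c /\ forall a, Q a <-> (G a /\ a *: (c *: w) = 0)].
Proof.
pose F1 I := exists g, [/\ G g, I = annp (g *: w) & ~ annp (g *: w) 1].
have [I [[g0 [Gg0 -> n1]] maxI]] : exists I, F1 I /\ forall J, F1 J -> psub I J -> psub J I.
  apply: NoethG; first by move=> I [g [_ -> _]]; apply: annp_ideal.
  exists (annp (1 *: w)), 1; split => //.
  move=> [_ [c [Gc nc e]]]; apply: nc; apply: Hw => //.
  by move: e; rewrite mulr1 scale1r.
set v0 := g0 *: w.
have Q0P : psub (annp v0) P.
  move=> a [Ga [c [Gc nc e]]]; apply: NNPP => na; apply: n1; split; first exact: G1.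
  by exists (c * a); split; [exact: GM Gc Ga | exact: notP_mul Gc Ga nc na | rewrite mulr1].
have Q0prime : primeG G (annp v0).
  split; [exact: annp_ideal | exact: n1|].
  move=> a b Ga Gb Qab; case: (classic (annp v0 a)) => [|na]; first by left.
  right.
  have F1a : F1 (annp ((a * g0) *: w)).
    exists (a * g0); split => //; first exact: GM Ga Gg0.
    move=> [_ [c [Gc nc e]]]; apply: na; split => //.
    by exists c; split => //; move: e; rewrite mulr1 /v0 !scalerA mulrA.
  have sub : psub (annp v0) (annp ((a * g0) *: w)).
    move=> x [Gx [c [Gc nc e]]]; split => //; exists c; split => //.
    by rewrite -[(a * g0) *: w]scalerA -/v0 (scC _ (GM Gc Gx) Ga) e scaler0.
  apply: (maxI _ F1a sub); split => //.
  case: Qab => _ [c [Gc nc e]]; exists c; split => //.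
  by rewrite -[(a * g0) *: w]scalerA -/v0 scalerA -mulrA (GC Gb Ga).
pose F2 I := exists c, [/\ G c, ~ P c & I = ann (c *: v0)].
have [I2 [[c1 [Gc1 nc1 ->]] max2]] : exists I, F2 I /\ forall J, F2 J -> psub I J -> psub J I.
  apply: NoethG; first by move=> I3 [c [_ _ ->]]; apply: ann_ideal.
  by exists (ann (1 *: v0)), 1; split => //; exact: notP1.
exists (annp v0); split => //.
exists (c1 * g0); split; first exact: GM Gc1 Gg0.
move=> a; rewrite -scalerA -/v0; split.
- move=> [Ga [d [Gd nd e]]].
  have F2d : F2 (ann ((d * c1) *: v0)).
    by exists (d * c1); split => //; [exact: GM Gd Gc1 | exact: notP_mul Gd Gc1 nd nc1].
  have sub : psub (ann (c1 *: v0)) (ann ((d * c1) *: v0)).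
    move=> x [Gx e2]; split => //.
    by rewrite scalerA mulrA (GC Gx Gd) -mulrA -scalerA -scalerA e2 scaler0.
  have := max2 _ F2d sub a; apply; split => //.
  by rewrite scalerA (GC Gd Gc1) (mCA _ Ga Gc1) (GC Ga Gd) -scalerA e scaler0.
- move=> [Ga e]; split => //; exists c1; split => //.
  by rewrite (GC Gc1 Ga) -scalerA.
Qed.

End LemL.

Lemma coh_eq (P Q : U -> Prop) n : coheight G Q n -> coheight G P n -> primeG G P ->
  psub Q P -> psub P Q.
Proof.
case: n => [|j] [ZQ nQ] [ZP nP] HP sQP.
  case: ZQ => _ _ H; case: HP => HP1 HP2 _; exact: H HP1 HP2 sQP.
case: ZQ => [ZQ|[_ _ H]]; first by case: (nQ j (ltnSn j)).
exact: H HP (nP j (ltnSn j)) sQP.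
Qed.

Lemma prime_sub (P : U -> Prop) a : primeG G P -> P a -> G a.
Proof. by case=> [[H _ _ _] _ _]; apply: H. Qed.

Lemma part2 : (exists n, forall P, Ass G (fun _ : M => True) P -> coheight G P n) ->
   forall (x y : M) (P : U -> Prop),
     Ass G (Gcyc G (x + y)) P -> Ass G (Gcyc G x) P \/ Ass G (Gcyc G y) P.
Proof.
move=> [n Hn] x y P [HP [z [[g [Gg zE]] Pz]]].
have AssP : Ass G (fun _ : M => True) P by split => //; exists z.
case: (classic (exists h k, [/\ G h, G k, h *: z = k *: x & h *: z <> 0])).
  move=> [h [k [Gh Gk hk hz0]]]; left; split => //.
  exists (k *: x); split; first by exists k.
  have nPh : ~ P h by move=> /Pz [_ ?].
  move=> a; split.
    move=> Pa; have Ga := prime_sub HP Pa; split => //.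
    rewrite -hk scalerA; apply: (proj2 (proj1 (Pz _) _)).
    by rewrite (GC Ga Gh); apply: (P_mul HP).
  move=> [Ga e]; rewrite -hk scalerA in e.
  have : P (a * h) by apply/Pz; split => //; apply: GM.
  by case: HP => _ _ H /(H _ _ Ga Gh) [].
move=> nex; right.
set w := g *: y.
have Hw : forall s, G s -> s *: w = 0 -> P s.
  move=> s Gs sw; apply/Pz; split => //.
  apply: NNPP => sz; apply: nex; exists s, (s * g); split => //; first exact: GM.
  by rewrite zE scalerDr -/w scalerDr sw addr0 scalerA.
have [Q [HQ sQP [c [Gc Qc]]]] := lemL HP Hw.
have AssQ : Ass G (fun _ : M => True) Q by split => //; exists (c *: w).
have sPQ := coh_eq (Hn _ AssQ) (Hn _ AssP) HP sQP.
split => //; exists (c *: w); split; first by exists (c * g); split; [exact: GM | rewrite scalerA].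
move=> a; split; first by move/sPQ/Qc.
by move/Qc/sQP.
Qed.

End Mod.


Section Nak.
Variables (K : fieldType) (U : algType K) (G : U -> Prop).
Hypothesis HG : comm_subalg G.
Variables (V : zmodType) (act : U -> V -> V) (W : V -> Prop) (m : U -> Prop).
Hypotheses (actDv : forall a v w, act a (v + w) = act a v + act a w)
  (actDa : forall a b v, act (a + b) v = act a v + act b v)
  (actM : forall a b v, G a -> G b -> act (a * b) v = act a (act b v))
  (act1 : forall v, act 1 v = v)
  (W0 : W 0) (WD : forall v w, W v -> W w -> W (v + w)) (WN : forall v, W v -> W (- v))
  (Wact : forall a v, G a -> W v -> W (act a v))
  (Hm : idealG G m).

Lemma act0v a : act a 0 = 0.
Proof. have h := actDv a 0 0; rewrite addr0 in h; by apply: (addrI (act a 0)); rewrite -h addr0. Qed.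
Lemma actNv a v : act a (- v) = - act a v.
Proof. by apply/eqP; rewrite -subr_eq0 opprK -actDv addNr act0v. Qed.
Lemma act0a v : act 0 v = 0.
Proof. have h := actDa 0 0 v; rewrite addr0 in h; by apply: (addrI (act 0 v)); rewrite -h addr0. Qed.
Lemma actNa a v : act (- a) v = - act a v.
Proof. by apply/eqP; rewrite -subr_eq0 opprK -actDa addNr act0a. Qed.
Lemma actC a b v : G a -> G b -> act a (act b v) = act b (act a v).
Proof. by move=> Ga Gb; rewrite -!actM // (GC HG Ga Gb). Qed.

Lemma mG a : m a -> G a. Proof. by case: Hm => H _ _ _; apply: H. Qed.
Lemma mD a b : m a -> m b -> m (a + b). Proof. by case: Hm => _ _ H _; apply: H. Qed.
Lemma mM g a : G g -> m a -> m (g * a). Proof. by case: Hm => _ _ _ H; apply: H. Qed.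
Lemma m0 : m 0. Proof. by case: Hm. Qed.
Lemma mN a : m a -> m (- a).
Proof. by move=> ma; rewrite -mulN1r; apply: mM => //; apply: (GN HG); apply: (G1 HG). Qed.

Inductive msp (k : nat) (vs : nat -> V) : V -> Prop :=
| mspW y : W y -> msp k vs y
| mspg a j : m a -> (j < k)%N -> msp k vs (act a (vs j))
| mspD y z : msp k vs y -> msp k vs z -> msp k vs (y + z).

Lemma msp0 k vs : msp k vs 0. Proof. by apply: mspW. Qed.
Lemma mspN k vs y : msp k vs y -> msp k vs (- y).
Proof.
elim=> [z Wz|a j ma jk|y1 y2 _ IH1 _ IH2].
- by apply: mspW; apply: WN.
- by rewrite -actNa; apply: mspg => //; apply: mN.
- by rewrite opprD; apply: mspD.
Qed.
Lemma mspB k vs y z : msp k vs y -> msp k vs z -> msp k vs (y - z).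
Proof. by move=> ? ?; apply: mspD => //; apply: mspN. Qed.
Lemma msp_act k vs b y : G b -> msp k vs y -> msp k vs (act b y).
Proof.
move=> Gb; elim=> [z Wz|a j ma jk|y1 y2 _ IH1 _ IH2].
- by apply: mspW; apply: Wact.
- by rewrite -actM //; [apply: mspg => //; apply: mM | apply: mG].
- by rewrite actDv; apply: mspD.
Qed.
Lemma msp_sum k vs n (F : 'I_n -> V) : (forall j, msp k vs (F j)) -> msp k vs (\sum_(j < n) F j).
Proof. by move=> H; apply: big_ind => //; [exact: msp0 | exact: mspD]. Qed.

Lemma msp_split k vs y : msp k.+1 vs y -> exists a, m a /\ msp k vs (y - act a (vs k)).
Proof.
elim=> [z Wz|a j ma jk|y1 y2 _ [a1 [m1 H1]] _ [a2 [m2 H2]]].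
- by exists 0; split; [exact: m0 | rewrite act0a subr0; apply: mspW].
- move: jk; rewrite ltnS leq_eqVlt => /orP [/eqP ->|jk].
    by exists a; split => //; rewrite subrr; apply: msp0.
  exists 0; split; first exact: m0.
  by rewrite act0a subr0; apply: mspg.
- exists (a1 + a2); split; first exact: mD.
  have -> : y1 + y2 - act (a1 + a2) (vs k) = (y1 - act a1 (vs k)) + (y2 - act a2 (vs k)).
    by rewrite actDa opprD addrACA.
  exact: mspD.
Qed.

Lemma msp_shift k vs s y : G s -> msp k vs y -> msp k (fun j => act s (vs j)) (act s y).
Proof.
move=> Gs; elim=> [z Wz|a j ma jk|y1 y2 _ IH1 _ IH2].
- by apply: mspW; apply: Wact.
- by rewrite actC //; [apply: mspg | apply: mG].
- by rewrite actDv; apply: mspD.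
Qed.

Lemma msp_kill k vs c y : G c -> (forall j, (j < k)%N -> W (act c (vs j))) ->
  msp k vs y -> W (act c y).
Proof.
move=> Gc Hc; elim=> [z Wz|a j ma jk|y1 y2 _ IH1 _ IH2].
- exact: Wact.
- by rewrite actC //; [apply: Wact; [apply: mG| apply: Hc] | apply: mG].
- by rewrite actDv; apply: WD.
Qed.

Lemma nakayama k : forall (vs : nat -> V) t, G t -> m (1 - t) ->
  (forall i, (i < k)%N -> msp k vs (act t (vs i))) ->
  exists c, [/\ G c, m (1 - c) & forall i, (i < k)%N -> W (act c (vs i))].
Proof.
elim: k => [|k IH] vs t Gt mt H.
  by exists 1; split => //; [exact: (G1 HG) | rewrite subrr; exact: m0].
have [a [ma Ha]] := msp_split (H k (ltnSn k)).
set s := t - a.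
have Gs : G s by apply: (GB HG) => //; apply: mG.
have ms : m (1 - s) by rewrite /s opprB addrCA; apply: mD.
have Ek : msp k vs (act s (vs k)) by rewrite /s actDa actNa.
clearbody s.
pose vs' j := act s (vs j).
have Hi : forall i, (i < k)%N -> msp k vs' (act (s * t) (vs' i)).
  move=> i ik.
  have [b [mb Hb]] := msp_split (H i (ltnW ik)).
  have H1 : msp k vs (act s (act t (vs i))).
    have := msp_act Gs Hb; rewrite actDv actNv => H2.
    have -> : act s (act t (vs i)) =
       (act s (act t (vs i)) - act s (act b (vs k))) + act b (act s (vs k)).
      by rewrite (actC _ Gs (mG mb)) subrK.
    by apply: mspD => //; apply: msp_act => //; apply: (mG mb).
  rewrite /vs' (_ : act (s * t) (act s (vs i)) = act s (act s (act t (vs i)))).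
    exact: msp_shift.
  by rewrite actM // (actC _ Gt Gs).
have mst : m (1 - s * t).
  have -> : 1 - s * t = (1 - s) + s * (1 - t).
    by rewrite mulrBr mulr1 addrA addrNK.
  by apply: mD => //; apply: mM.
have [c' [Gc' mc' Hc']] := IH vs' (s * t) (GM HG Gs Gt) mst Hi.
exists (c' * (s * s)); split.
- by apply: (GM HG) => //; apply: (GM HG).
- have -> : 1 - c' * (s * s) = (1 - c') + (c' * (1 - s) + (c' * s) * (1 - s)).
    rewrite !mulrBr !mulr1 mulrA.
    by rewrite [c' - _ + _]addrA subrK [1 - c' + _]addrA subrK.
  apply: mD => //; apply: mD; first exact: mM Gc' ms.
  exact: mM (GM HG Gc' Gs) ms.
- have Gss := GM HG Gs Gs.
  move=> i; rewrite ltnS leq_eqVlt => /orP [/eqP ->|ik].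
    rewrite (actM _ Gc' Gss) (actM _ Gs Gs).
    have := msp_shift Gs Ek; exact: msp_kill Gc' Hc'.
  rewrite (actM _ Gc' Gss) (actM _ Gs Gs).
  by rewrite (actC _ Gc' Gs); apply: Wact => //; apply: Hc'.
Qed.

End Nak.


Section P1.
Variables (K : fieldType) (U : algType K) (G : U -> Prop).
Hypothesis HG : comm_subalg G.
Hypothesis NoethG : forall F : (U -> Prop) -> Prop,
  (forall I, F I -> idealG G I) -> (exists I, F I) ->
  exists I, F I /\ forall J, F J -> psub I J -> psub J I.
Variable M : lmodType U.
Variables (u : U) (HLg : GuG_fg_left G u) (HRg : GuG_fg_right G u).

Let GC := GC HG.
Let GM := GM HG.
Let G1 := G1 HG.
Let G0 := G0 HG.

Lemma nth_G (cs : seq U) i : (forall c, c \in cs -> G c) -> G cs`_i.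
Proof.
move=> H; case: (ltnP i (size cs)) => [ic|ic]; first by apply: H; apply: mem_nth.
by rewrite nth_default.
Qed.

Lemma GuG_pair a b : G a -> G b -> GuG G u (a * u * b).
Proof. by move=> Ga Gb; exists [:: (a, b)]; split; [move=> ab; rewrite mem_seq1 => /eqP -> | rewrite big_seq1]. Qed.

Lemma sum_pairs (Pr : U -> Prop) (s : seq (U * U)) : Pr 0 -> (forall x y, Pr x -> Pr y -> Pr (x + y)) ->
  (forall ab, ab \in s -> Pr (ab.1 * u * ab.2)) -> Pr (\sum_(ab <- s) ab.1 * u * ab.2).
Proof. by move=> P0 PD H; rewrite big_seq; apply: big_ind => //. Qed.

Lemma GuG_mulr w g : GuG G u w -> G g -> GuG G u (w * g).
Proof.
move=> [s [Hs ->]] Gg; exists (map (fun ab => (ab.1, ab.2 * g)) s); split.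
  by move=> ab /mapP [[a b] abs ->] /=; have [? ?] := Hs _ abs; split => //; apply: GM.
by rewrite big_map big_distrl /=; apply: eq_bigr => ab _; rewrite mulrA.
Qed.

Section QB.
Variable q : U -> Prop.
Hypothesis Hq : idealG G q.

Inductive qb : U -> Prop :=
| qb0 : qb 0
| qbg a b : q a -> G b -> qb (a * u * b)
| qbD x y : qb x -> qb y -> qb (x + y).

Lemma qb_mulr w g : G g -> qb w -> qb (w * g).
Proof.
move=> Gg; elim=> [|a b qa Gb|x y _ IHx _ IHy].
- by rewrite mul0r; exact: qb0.
- by rewrite -mulrA; apply: qbg => //; apply: GM.
- by rewrite mulrDl; apply: qbD.
Qed.

Lemma qb_N w : qb w -> qb (- w).
Proof.
elim=> [|a b qa Gb|x y _ IHx _ IHy].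
- by rewrite oppr0; exact: qb0.
- rewrite -!mulNr; apply: qbg => //.
  case: Hq => _ _ _ H; rewrite -mulN1r; apply: H => //; apply: (GN HG); exact: G1.
- by rewrite opprD; apply: qbD.
Qed.

Lemma qb_sum n (F : 'I_n -> U) : (forall j, qb (F j)) -> qb (\sum_(j < n) F j).
Proof. by move=> H; apply: big_ind => //; [exact: qb0 | exact: qbD]. Qed.
End QB.


Lemma right_nak (q Q mm : U -> Prop) (Hq : idealG G q) (HQ : idealG G Q) (Hmm : idealG G mm)
  (sQ : psub Q mm) (HQB : forall w, GuG G u w -> quG_Gup G q Q u w) :
  exists c, [/\ G c, mm (1 - c) & forall w, GuG G u w -> qb q (w * c)].
Proof.
have [rv [rvB rvgen]] := HRg.
pose actR (a : U) (w : U) := w * a.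
have actDv : forall a v w, actR a (v + w) = actR a v + actR a w by move=> *; rewrite /actR mulrDl.
have actDa : forall a b v, actR (a + b) v = actR a v + actR b v by move=> *; rewrite /actR mulrDr.
have actM : forall a b v, G a -> G b -> actR (a * b) v = actR a (actR b v).
  by move=> a b v Ga Gb; rewrite /actR (GC Ga Gb) mulrA.
have Wact : forall a v, G a -> qb q v -> qb q (actR a v) by move=> a v Ga; apply: qb_mulr.
have m1 : mm (1 - 1) by rewrite subrr; case: Hmm.
have hyp : forall i, (i < size rv)%N ->
    msp actR (qb q) mm (size rv) (fun j => rv`_j) (actR 1 (rv`_i)).
  move=> i ir; rewrite /actR mulr1.
  have [s [Hs ->]] := HQB _ (rvB _ (mem_nth 0 ir)).
  apply: sum_pairs; first by apply: mspW; apply: qb0.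
    by move=> x y; apply: mspD.
  move=> [a b] /Hs /= [[qa Gb]|[Ga Qb]].
    by apply: mspW; apply: qbg.
  rewrite -[a * u]mulr1; have [cs [_ csG ->]] := rvgen _ (GuG_pair Ga G1).
  rewrite big_distrl /=; apply: msp_sum => [|j]; first exact: qb0.
  rewrite -mulrA; apply: (mspg actR (qb q) (m := mm)) => //.
  apply: sQ; case: HQ => _ _ _ H; apply: H => //; exact: nth_G.
have [c [Gc mc Hc]] := nakayama HG actDv actDa actM (qb0 _) (@qbD q) Wact Hmm G1 m1 hyp.
exists c; split => // w /rvgen [cs [_ csG ->]].
rewrite big_distrl /=; apply: qb_sum => j.
rewrite (mAC HG) //; last exact: nth_G.
by apply: qb_mulr; [exact: nth_G | apply: Hc].
Qed.


Lemma part1 (x : M) (q : U -> Prop) : Supp G (Gcyc G (u *: x)) q ->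
  exists p, Ass G (Gcyc G x) p /\ ~ (forall w, GuG G u w -> quG_Gup G q p u w).
Proof.
move=> [Hq [z [[g [Gg zE]] Hz]]].
have Iq : idealG G q by case: Hq.
apply: NNPP => Hn.
have H : forall p, Ass G (Gcyc G x) p -> forall w, GuG G u w -> quG_Gup G q p u w.
  by move=> p Ap; apply: NNPP => np; apply: Hn; exists p; split.
pose A c := G c /\ forall w, GuG G u w -> qb q (w * c).
have A_ideal : idealG G A.
  split.
  - by move=> c [].
  - by split => // w _; rewrite mulr0; exact: qb0.
  - move=> c d [Gc Hc] [Gd Hd]; split; first exact: (GD HG).
    by move=> w Bw; rewrite mulrDr; apply: qbD; [apply: Hc| apply: Hd].
  - move=> h c Gh [Gc Hc]; split; first exact: GM.
    by move=> w Bw; rewrite mulrA; apply: Hc; apply: GuG_mulr.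
have [a [i [Aa [Gi ix] ai1]]] : exists a i, [/\ A a, ann G x i & a + i = 1].
  apply: NNPP => nai.
  pose F3 J := [/\ idealG G J, ~ J 1, psub A J & psub (ann G x) J].
  have [mm [[Hmm n1 sA sI] maxm]] : exists I, F3 I /\ forall J, F3 J -> psub I J -> psub J I.
    apply: NoethG; first by move=> I [].
    have [AG A0 AD AM] := A_ideal.
    have [IG I0 ID IM] := ann_ideal HG x.
    exists (fun y => exists a i, [/\ A a, ann G x i & y = a + i]); split.
    - split.
      + by move=> y [a [i [Aa Ii ->]]]; apply: (GD HG); [apply: AG | apply: IG].
      + by exists 0, 0; split => //; rewrite addr0.
      + move=> y1 y2 [a1 [i1 [A1 I1 ->]]] [a2 [i2 [A2 I2 ->]]].
        by exists (a1 + a2), (i1 + i2); split; [apply: AD| apply: ID| rewrite addrACA].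
      + move=> h y Gh [a [i [Aa Ii ->]]].
        by exists (h * a), (h * i); split; [apply: AM| apply: IM| rewrite mulrDr].
    - by move=> [a [i [Aa Ii e]]]; apply: nai; exists a, i; split.
    - by move=> y Ay; exists y, 0; split => //; rewrite addr0.
    - by move=> y Iy; exists 0, y; split => //; rewrite add0r.
  have [mG m0 mD mM] := Hmm.
  have Pmm : primeG G mm.
    split => // a b Ga Gb mab; case: (classic (mm a)) => [|na]; first by left.
    right.
    pose m' y := exists y0 h, [/\ mm y0, G h & y = y0 + a * h].
    have Hm' : idealG G m'.
      split.
      + by move=> y [y0 [h [my0 Gh ->]]]; apply: (GD HG); [apply: mG| apply: GM].
      + by exists 0, 0; split => //; rewrite mulr0 addr0.
      + move=> y1 y2 [y0 [h [my0 Gh ->]]] [y0' [h' [my0' Gh' ->]]].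
        exists (y0 + y0'), (h + h'); split; [exact: mD| exact: (GD HG)|].
        by rewrite mulrDr addrACA.
      + move=> k y Gk [y0 [h [my0 Gh ->]]].
        exists (k * y0), (k * h); split; [exact: mM| exact: GM|].
        by rewrite mulrDr (mCA HG _ Gk Ga).
    case: (classic (m' 1)) => [[y0 [h [my0 Gh e]]]|n1'].
      rewrite -[b]mulr1 e mulrDr; apply: mD; first exact: mM.
      rewrite mulrA (GC Gb Ga) (GC (GM Ga Gb) Gh); exact: mM.
    have F3m' : F3 m'.
      split => //.
      - by move=> y Ay; exists y, 0; split; [apply: sA | exact: G0 | rewrite mulr0 addr0].
      - by move=> y Iy; exists y, 0; split; [apply: sI | exact: G0 | rewrite mulr0 addr0].
    have smm' : psub mm m' by move=> y my; exists y, 0; split; [by [] | exact: G0 | rewrite mulr0 addr0].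
    case: na; apply: (maxm _ F3m' smm'); exists 0, 1; split; [by []|exact: G1|by rewrite mulr1 add0r].
  have [Q [HQ sQ [c0 [Gc0 Qc0]]]] := lemL HG NoethG Pmm (w := x) (fun s Gs sx => sI s (conj Gs sx)).
  have AQ : Ass G (Gcyc G x) Q by split => //; exists (c0 *: x); split => //; exists c0.
  have IQ : idealG G Q by case: HQ.
  have [c [Gc mc Ac]] := right_nak Iq IQ Hmm sQ (H _ AQ).
  have mmc : mm c by apply: sA; split.
  by apply: n1; rewrite -(subrK c 1); apply: mD.
have [lv [lvB lvgen]] := HLg.
pose actL (b : U) (v : M) := b *: v.
pose W (v : M) := v = 0.
have actDv : forall a' v w, actL a' (v + w) = actL a' v + actL a' w by move=> *; rewrite /actL scalerDr.
have actDa : forall a' b v, actL (a' + b) v = actL a' v + actL b v by move=> *; rewrite /actL scalerDl.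
have actM : forall a' b v, G a' -> G b -> actL (a' * b) v = actL a' (actL b v).
  by move=> *; rewrite /actL scalerA.
have WD : forall v w, W v -> W w -> W (v + w) by move=> v w; rewrite /W => -> ->; rewrite addr0.
have Wact : forall a' v, G a' -> W v -> W (actL a' v) by move=> a' v _; rewrite /W /actL => ->; rewrite scaler0.
have W0 : W 0 by [].
have [qG q0 qD qM] := Iq.
have m1 : q (1 - 1) by rewrite subrr.
have key : forall y, qb q y -> msp actL W q (size lv) (fun j => lv`_j *: x) (y *: x).
  move=> y; elim=> [|a' b qa Gb|y1 y2 _ IH1 _ IH2].
  - by apply: mspW; rewrite /W scale0r.
  - have [cs [_ csG e]] := lvgen _ (GuG_pair G1 Gb).
    rewrite mul1r in e; rewrite -mulrA e mulr_sumr scaler_suml.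
    apply: msp_sum => // j.
    rewrite mulrA -scalerA; apply: (mspg actL W (m := q)) => //.
    rewrite (GC (qG _ qa) (nth_G j csG)); exact: qM (nth_G j csG) qa.
  - by rewrite scalerDl; apply: mspD.
have hyp : forall i0, (i0 < size lv)%N ->
    msp actL W q (size lv) (fun j => lv`_j *: x) (actL 1 (lv`_i0 *: x)).
  move=> i0 ir; rewrite /actL scale1r.
  have -> : lv`_i0 *: x = (lv`_i0 * a) *: x.
    by rewrite -{1}[x]scale1r -ai1 scalerDl scalerDr ix scaler0 addr0 scalerA.
  apply: key; apply: Aa.2; apply: lvB; exact: mem_nth.
have [c [Gc qc Hc]] := nakayama HG actDv actDa actM W0 WD Wact Iq G1 m1 hyp.
have nqc : ~ q c.
  by move=> qc'; case: Hq => _ n1q _; apply: n1q; rewrite -(subrK c 1); apply: qD.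
have := Hz c Gc nqc; rewrite zE [g *: _]scalerA -[g * u]mulr1.
have [cs [_ csG ->]] := lvgen _ (GuG_pair Gg G1).
rewrite scaler_suml scaler_sumr big1 ?eqxx // => j _.
rewrite -scalerA (scC HG _ Gc (nth_G j csG)).
by have := Hc j (ltn_ord j); rewrite /W /actL => ->; rewrite scaler0.
Qed.

End P1.


Theorem lemma4p1 (K : closedFieldType) (charK0 : [pchar K] =i pred0)
  (U : algType K) (G : U -> Prop) (HG : standing G) (M : lmodType U) :
  (forall (u : U) (x : M) (q : U -> Prop),
     Supp G (Gcyc G (u *: x)) q ->
     exists p : U -> Prop, Ass G (Gcyc G x) p /\
       ~ (forall w, GuG G u w -> quG_Gup G q p u w))
  /\
  ((exists n, forall P, Ass G (fun _ : M => True) P -> coheight G P n) ->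
   forall (x y : M) (P : U -> Prop),
     Ass G (Gcyc G (x + y)) P -> Ass G (Gcyc G x) P \/ Ass G (Gcyc G y) P).
Proof.
case: HG => HGc [s [sG gen]] _ fg.
have FGG := FG_G HGc sG gen.
have NoethG : forall F : (U -> Prop) -> Prop,
  (forall I, F I -> idealG G I) -> (exists I, F I) ->
  exists I, F I /\ forall J, F J -> psub I J -> psub J I.
  by move=> F HF HI; apply: (FG_max FGG HF HI).
split.
  move=> u x q Hs; have [fl fr] := fg u.
  exact: (part1 HGc NoethG fl fr Hs).
exact: (part2 HGc NoethG).
Qed.
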